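(* The lattice of subvarieties of the monoid variety $\mathbf M(xyx)\vee\mathbf M_\gamma(xx^+yy^+)$ is not modular.
   Context: Words are elements of the free monoid $\mathfrak X^\ast$ over a countably infinite alphabet. For a set $W$ of words, $M(W)$ is the Rees quotient of $\mathfrak X^\ast$ by the ideal of all words that are not factors of any word in $W$; $\mathbf M(xyx)$ is the monoid variety generated by $M(\{xyx\})$. A letter is simple in a word if it occurs exactly once. The congruence $\gamma$: $\mathbf u\mathrel\gamma\mathbf v$ iff $\mathbf u,\mathbf v$ have the same simple letters and $\mathbf u$ is obtained from $\mathbf v$ by changing individual exponents of letters ($\mathbf u=x_1^{e_1}\cdots x_r^{e_r}$, $\mathbf v=x_1^{f_1}\cdots x_r^{f_r}$, $e_i,f_i\ge1$). For $\gamma$-classes, $\mathtt v\le\mathtt u$ if $\mathtt u=\mathtt p\mathtt v\mathtt s$ for $\gamma$-classes $\mathtt p,\mathtt s$; for a set $\mathtt W$ of $\gamma$-classes, $M_\gamma(\mathtt W)$ is the Rees quotient of $\mathfrak X^\ast/\gamma$ by the ideal of $\gamma$-classes not $\le$ any member of $\mathtt W$. $xx^+yy^+$ is the $\gamma$-class of $x^2y^2$, and $\mathbf M_\gamma(xx^+yy^+)$ is the monoid variety generated by $M_\gamma(\{xx^+yy^+\})$. $\vee$ denotes join of varieties. *)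

(* Defs.v *)
From Stdlib Require Import ClassicalEpsilon.
From mathcomp Require Import all_boot.
Set Implicit Arguments. Unset Strict Implicit. Unset Printing Implicit Defensive.

Definition word := seq nat.

Record magma := Magma { car :> Type; mmul : car -> car -> car; mone : car }.

Definition is_monoid (M : magma) : Prop :=
  [/\ forall a b c : M, mmul a (mmul b c) = mmul (mmul a b) c,
      forall a : M, mmul (mone M) a = a
    & forall a : M, mmul a (mone M) = a].

Definition eval (M : magma) (f : nat -> M) (w : word) : M :=
  foldr (fun a acc => mmul (f a) acc) (mone M) w.

Definition sat (M : magma) (u v : word) : Prop :=
  forall f : nat -> M, eval f u = eval f v.

Definition mclass := magma -> Prop.

Definition is_variety (K : mclass) : Prop :=
  exists S : word -> word -> Prop,
    forall M, K M <-> (is_monoid M /\ forall u v, S u v -> sat M u v).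

Definition var_gen (G : mclass) : mclass :=
  fun M => is_monoid M /\ forall u v, (forall A, G A -> sat A u v) -> sat M u v.

Definition vjoin (K1 K2 : mclass) : mclass := var_gen (fun A => K1 A \/ K2 A).
Definition vmeet (K1 K2 : mclass) : mclass := fun M => K1 M /\ K2 M.
Definition vsub (K1 K2 : mclass) : Prop := forall M, K1 M -> K2 M.
Definition veq (K1 K2 : mclass) : Prop := forall M, K1 M <-> K2 M.

Definition subvariety (K V : mclass) : Prop := is_variety K /\ vsub K V.

Definition subvar_lattice_modular (V : mclass) : Prop :=
  forall X Y Z, subvariety X V -> subvariety Y V -> subvariety Z V ->
    vsub X Z -> veq (vjoin X (vmeet Y Z)) (vmeet (vjoin X Y) Z).

(** Rees quotient of the free monoid modulo a congruence presented by a
    canonical-form map [canon] (u and v congruent iff canon u = canon v),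
    by the ideal of classes that are not [<=] any class in W.
    Elements: [Some w] with w a canonical word whose class divides the class
    of some member of W, and [None] = 0. *)
Section Rees.
Variable canon : word -> word.
Variable W : seq word.

Definition rees_ok (w : word) : Prop :=
  canon w = w /\ exists u, u \in W /\ exists p s, canon (p ++ w ++ s) = canon u.

Definition rees_car := option {w : word | rees_ok w}.

Definition rees_mk (w : word) : rees_car :=
  match excluded_middle_informative (rees_ok w) with
  | left h => Some (exist _ w h)
  | right _ => None
  end.

Definition rees_mul (x y : rees_car) : rees_car :=
  match x, y with
  | Some a, Some b => rees_mk (canon (proj1_sig a ++ proj1_sig b))
  | _, _ => None
  end.

Definition rees_magma : magma := Magma rees_mul (rees_mk (canon [::])).
End Rees.

(** M(W): canon is the identity (the free monoid itself); [<=] is "is a factor of". *)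
Definition M_of (W : seq word) : magma := rees_magma id W.

(** The congruence gamma, via a canonical representative of each gamma-class:
    a word is determined up to gamma by its block sequence (compress) and its set of
    simple letters.  In the canonical representative each block x^e is written
    x if x is simple or x occurs in several blocks, and xx if x is a non-simple
    letter occupying a single block. *)
Fixpoint compress (w : word) : word :=
  match w with
  | [::] => [::]
  | a :: t =>
      let c := compress t in
      if c is b :: _ then (if a == b then c else a :: c) else [:: a]
  end.

Definition simple_letter (a : nat) (w : word) : bool := count_mem a w == 1.

Definition gamma_canon (w : word) : word :=
  flatten [seq (if simple_letter a w then [:: a]
                else if count_mem a (compress w) == 1 then [:: a; a] else [:: a])
          | a <- compress w].

Definition gamma (u v : word) : Prop := gamma_canon u = gamma_canon v.

Definition Mgamma_of (W : seq word) : magma := rees_magma gamma_canon W.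

(** Letters x = 0, y = 1. *)
Definition w_xyx : word := [:: 0; 1; 0].
Definition w_xxyy : word := [:: 0; 0; 1; 1].  (* representative of xx^+yy^+ *)

Definition var_of (A : magma) : mclass := var_gen (fun B => B = A).

Definition V_main : mclass :=
  vjoin (var_of (M_of [:: w_xyx])) (var_of (Mgamma_of [:: w_xxyy])).

(* Main.v *)
Require Import Defs.
From mathcomp Require Import all_boot.
From Stdlib Require Import ProofIrrelevance ClassicalEpsilon.
Set Implicit Arguments. Unset Strict Implicit. Unset Printing Implicit Defensive.

Lemma eval_cons (M : magma) (f : nat -> M) a u :
  eval f (a :: u) = mmul (f a) (eval f u).
Proof. by []. Qed.

Lemma eval_hom (M N : magma) (h : M -> N) :
  (forall a b, h (mmul a b) = mmul (h a) (h b)) -> h (mone M) = mone N ->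
  forall f u, h (eval f u) = eval (fun k => h (f k)) u.
Proof.
move=> hm h1 f; elim=> [|a u IH] //=.
by rewrite hm IH.
Qed.

Lemma sat_inj (M N : magma) (h : M -> N) :
  (forall a b, h (mmul a b) = mmul (h a) (h b)) -> h (mone M) = mone N ->
  injective h -> forall u v, sat N u v -> sat M u v.
Proof.
move=> hm h1 hi u v H f; apply: hi.
by rewrite !(eval_hom hm h1) H.
Qed.

Lemma eval_eq_in (M : magma) (f g : nat -> M) u :
  (forall k, k \in u -> f k = g k) -> eval f u = eval g u.
Proof.
elim: u => [|a u IH] //= H.
rewrite H ?mem_head //; congr mmul; apply: IH => k ku; apply: H.
by rewrite inE ku orbT.
Qed.

Lemma var_gen_variety (G : mclass) : is_variety (var_gen G).
Proof. by exists (fun u v => forall A, G A -> sat A u v). Qed.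

Lemma var_of_self (A : magma) : is_monoid A -> var_of A A.
Proof. by move=> mA; split=> // u v /(_ A erefl). Qed.

Lemma var_of_sat (A N : magma) u v : var_of A N -> sat A u v -> sat N u v.
Proof. by case=> _ H hA; apply: H => B ->. Qed.

Definition ordm n (k : nat) : 'I_n.+1 := @Ordinal n.+1 (k %% n.+1) (ltn_pmod k (ltn0Sn n)).

Lemma ordmK n (a : 'I_n.+1) : ordm n a = a.
Proof. by apply: val_inj; rewrite /= modn_small. Qed.

Definition allI n (P : 'I_n.+1 -> bool) := all (fun k => P (ordm n k)) (iota 0 n.+1).

Lemma allIP n (P : 'I_n.+1 -> bool) : allI P -> forall a, P a.
Proof.
move=> /allP H a; rewrite -(ordmK a); apply: H.
by rewrite mem_iota /= add0n ltn_ord.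
Qed.

Definition mulT n (T : seq (seq nat)) (a b : 'I_n.+1) : 'I_n.+1 :=
  ordm n (nth 0 (nth [::] T a) b).

Definition fmag n (T : seq (seq nat)) : magma := @Defs.Magma 'I_n.+1 (@mulT n T) ord0.

Lemma fmag_monoid n T :
  allI (fun a : 'I_n.+1 => allI (fun b : 'I_n.+1 => allI (fun c : 'I_n.+1 =>
     mulT T a (mulT T b c) == mulT T (mulT T a b) c))) ->
  allI (fun a : 'I_n.+1 => (mulT T ord0 a == a) && (mulT T a ord0 == a)) ->
  is_monoid (fmag n T).
Proof.
move=> H1 H2; split.
- by move=> a b c; apply/eqP; apply: (allIP (allIP (allIP H1 a) b) c).
- by move=> a; have /andP[/eqP] := allIP H2 a.
- by move=> a; have /andP[_ /eqP] := allIP H2 a.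
Qed.

Definition f3 (X : Type) (a b c : X) (k : nat) : X := nth a [:: a; b; c] k.

Lemma sat3 n T (u v : word) :
  all (fun k => k < 3) u -> all (fun k => k < 3) v ->
  allI (fun a : 'I_n.+1 => allI (fun b : 'I_n.+1 => allI (fun c : 'I_n.+1 =>
     eval (M := fmag n T) (f3 a b c) u == eval (M := fmag n T) (f3 a b c) v))) ->
  sat (fmag n T) u v.
Proof.
move=> /allP hu /allP hv H f.
have E : forall w, {in w, forall k, k < 3} ->
  eval f w = eval (M := fmag n T) (f3 (f 0) (f 1) (f 2)) w.
  move=> w hw; apply: eval_eq_in => k /hw.
  by case: k => [|[|[|k]]].
rewrite (E u hu) (E v hv); apply/eqP.
exact: (allIP (allIP (allIP H (f 0)) (f 1)) (f 2)).
Qed.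

Definition tA : seq (seq nat) :=
 [:: [:: 0; 1; 2; 3; 4; 5; 6];
  [:: 1; 6; 3; 6; 5; 6; 6];
  [:: 2; 4; 6; 6; 6; 6; 6];
  [:: 3; 5; 6; 6; 6; 6; 6];
  [:: 4; 6; 6; 6; 6; 6; 6];
  [:: 5; 6; 6; 6; 6; 6; 6];
  [:: 6; 6; 6; 6; 6; 6; 6]].
Definition wA : seq word := [:: [:: ]; [:: 0]; [:: 1]; [:: 0; 1]; [:: 1; 0]; [:: 0; 1; 0]].
Definition tB : seq (seq nat) :=
 [:: [:: 0; 1; 2; 3; 4; 5; 6; 7; 8; 9];
  [:: 1; 3; 4; 3; 6; 7; 6; 8; 8; 9];
  [:: 2; 9; 5; 9; 9; 5; 9; 9; 9; 9];
  [:: 3; 3; 6; 3; 6; 8; 6; 8; 8; 9];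
  [:: 4; 9; 7; 9; 9; 7; 9; 9; 9; 9];
  [:: 5; 9; 5; 9; 9; 5; 9; 9; 9; 9];
  [:: 6; 9; 8; 9; 9; 8; 9; 9; 9; 9];
  [:: 7; 9; 7; 9; 9; 7; 9; 9; 9; 9];
  [:: 8; 9; 8; 9; 9; 8; 9; 9; 9; 9];
  [:: 9; 9; 9; 9; 9; 9; 9; 9; 9; 9]].
Definition wB : seq word := [:: [:: ]; [:: 0]; [:: 1]; [:: 0; 0]; [:: 0; 1]; [:: 1; 1]; [:: 0; 0; 1]; [:: 0; 1; 1]; [:: 0; 0; 1; 1]].
Definition tM : seq (seq nat) :=
 [:: [:: 0; 1; 2; 3; 4; 5; 6; 7; 8; 9; 10; 11; 12; 13; 14; 15; 16; 17; 18];
  [:: 1; 2; 2; 18; 18; 18; 7; 8; 8; 18; 18; 18; 18; 18; 18; 18; 18; 18; 18];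
  [:: 2; 2; 2; 18; 18; 18; 8; 8; 8; 18; 18; 18; 18; 18; 18; 18; 18; 18; 18];
  [:: 3; 4; 5; 18; 18; 18; 9; 10; 11; 18; 18; 18; 15; 16; 17; 18; 18; 18; 18];
  [:: 4; 5; 5; 18; 18; 18; 10; 11; 11; 18; 18; 18; 18; 18; 18; 18; 18; 18; 18];
  [:: 5; 5; 5; 18; 18; 18; 11; 11; 11; 18; 18; 18; 18; 18; 18; 18; 18; 18; 18];
  [:: 6; 7; 8; 12; 13; 14; 18; 18; 18; 18; 18; 18; 18; 18; 18; 18; 18; 18; 18];
  [:: 7; 8; 8; 18; 18; 18; 18; 18; 18; 18; 18; 18; 18; 18; 18; 18; 18; 18; 18];
  [:: 8; 8; 8; 18; 18; 18; 18; 18; 18; 18; 18; 18; 18; 18; 18; 18; 18; 18; 18];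
  [:: 9; 10; 11; 15; 16; 17; 18; 18; 18; 18; 18; 18; 18; 18; 18; 18; 18; 18; 18];
  [:: 10; 11; 11; 18; 18; 18; 18; 18; 18; 18; 18; 18; 18; 18; 18; 18; 18; 18; 18];
  [:: 11; 11; 11; 18; 18; 18; 18; 18; 18; 18; 18; 18; 18; 18; 18; 18; 18; 18; 18];
  [:: 12; 13; 14; 18; 18; 18; 18; 18; 18; 18; 18; 18; 18; 18; 18; 18; 18; 18; 18];
  [:: 13; 14; 14; 18; 18; 18; 18; 18; 18; 18; 18; 18; 18; 18; 18; 18; 18; 18; 18];
  [:: 14; 14; 14; 18; 18; 18; 18; 18; 18; 18; 18; 18; 18; 18; 18; 18; 18; 18; 18];
  [:: 15; 16; 17; 18; 18; 18; 18; 18; 18; 18; 18; 18; 18; 18; 18; 18; 18; 18; 18];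
  [:: 16; 17; 17; 18; 18; 18; 18; 18; 18; 18; 18; 18; 18; 18; 18; 18; 18; 18; 18];
  [:: 17; 17; 17; 18; 18; 18; 18; 18; 18; 18; 18; 18; 18; 18; 18; 18; 18; 18; 18];
  [:: 18; 18; 18; 18; 18; 18; 18; 18; 18; 18; 18; 18; 18; 18; 18; 18; 18; 18; 18]].
Definition repM : seq (nat * nat) := [:: (0, 0); (0, 2); (0, 5); (1, 1); (1, 4); (1, 7); (2, 0); (2, 2); (2, 5); (3, 1); (3, 4); (3, 7); (4, 1); (4, 4); (4, 7); (5, 3); (5, 6); (5, 8); (6, 9)].
Definition phiT : seq (seq nat) :=
 [:: [:: 0; 18; 1; 18; 18; 2; 18; 18; 18; 18];
  [:: 18; 3; 18; 18; 4; 18; 18; 5; 18; 18];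
  [:: 6; 18; 7; 18; 18; 8; 18; 18; 18; 18];
  [:: 18; 9; 18; 18; 10; 18; 18; 11; 18; 18];
  [:: 18; 12; 18; 18; 13; 18; 18; 14; 18; 18];
  [:: 18; 18; 18; 15; 18; 18; 16; 18; 17; 18];
  [:: 18; 18; 18; 18; 18; 18; 18; 18; 18; 18]].
Definition Sp : seq (nat * nat) := [:: (0, 0); (0, 2); (0, 5); (1, 1); (1, 4); (1, 7); (1, 9); (2, 0); (2, 2); (2, 5); (3, 1); (3, 4); (3, 7); (3, 9); (4, 1); (4, 4); (4, 7); (4, 9); (5, 3); (5, 6); (5, 8); (5, 9); (6, 0); (6, 1); (6, 2); (6, 3); (6, 4); (6, 5); (6, 6); (6, 7); (6, 8); (6, 9)].

Definition MA := fmag 6 tA.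
Definition MB := fmag 9 tB.
Definition MM := fmag 18 tM.

Lemma MA_monoid : is_monoid MA.
Proof. apply: (@fmag_monoid _ _); vm_compute; reflexivity. Qed.
Lemma MB_monoid : is_monoid MB.
Proof. apply: (@fmag_monoid _ _); vm_compute; reflexivity. Qed.
Lemma MM_monoid : is_monoid MM.
Proof. apply: (@fmag_monoid _ _); vm_compute; reflexivity. Qed.

(* letters: x = 0, s = 1, y = 2 *)
Definition sL : word := [:: 0; 1; 0; 2; 2].
Definition sR : word := [:: 0; 1; 2; 0; 2].
Definition tL : word := [:: 0; 0; 1; 0; 2; 2].
Definition tR : word := [:: 0; 0; 1; 2; 0; 2].

Lemma MA_sig : sat MA sL sR.
Proof. apply: (@sat3 _ _ _ _); vm_compute; reflexivity. Qed.
Lemma MA_tau : sat MA tL tR.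
Proof. apply: (@sat3 _ _ _ _); vm_compute; reflexivity. Qed.
Lemma MM_tau : sat MM tL tR.
Proof. apply: (@sat3 _ _ _ _); vm_compute; reflexivity. Qed.
Lemma MB_1 : sat MB sL tL.
Proof. apply: (@sat3 _ _ _ _); vm_compute; reflexivity. Qed.
Lemma MB_2 : sat MB tR sR.
Proof. apply: (@sat3 _ _ _ _); vm_compute; reflexivity. Qed.

Lemma MM_not_sig : ~ sat MM sL sR.
Proof.
move=> /(_ (f3 (ordm 18 3) (ordm 18 6) (ordm 18 1))).
move/eqP; vm_compute => H; discriminate H.
Qed.

(* ---------- MM is a quotient of a submonoid of MA x MB ---------- *)

Definition repP (m : 'I_19) : 'I_7 * 'I_10 :=
  let p := nth (0, 0) repM m in (ordm 6 p.1, ordm 9 p.2).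
Definition phiP (p : 'I_7 * 'I_10) : 'I_19 := ordm 18 (nth 0 (nth [::] phiT p.1) p.2).
Definition inS (p : 'I_7 * 'I_10) : bool := (nat_of_ord p.1, nat_of_ord p.2) \in Sp.
Definition mulP (p q : 'I_7 * 'I_10) : 'I_7 * 'I_10 := (mulT tA p.1 q.1, mulT tB p.2 q.2).

Lemma HS_check : allI (fun m : 'I_18.+1 => allI (fun a : 'I_6.+1 => allI (fun b : 'I_9.+1 =>
   inS (a, b) ==> (inS (mulP (repP m) (a, b)) &&
                   (phiP (mulP (repP m) (a, b)) == mulT tM m (phiP (a, b))))))).
Proof. vm_compute; reflexivity. Qed.

Lemma HS_base : inS (ord0, ord0) && (phiP (ord0, ord0) == ord0).
Proof. vm_compute; reflexivity. Qed.

Lemma HS_eval (f : nat -> MM) u :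
  inS (eval (M := MA) (fun k => (repP (f k)).1) u, eval (M := MB) (fun k => (repP (f k)).2) u)
  /\ phiP (eval (M := MA) (fun k => (repP (f k)).1) u, eval (M := MB) (fun k => (repP (f k)).2) u)
     = eval f u.
Proof.
elim: u => [|a u [IH1 IH2]].
  by have /andP[h1 /eqP h2] := HS_base; split.
rewrite !eval_cons.
set p := (eval _ u, eval _ u) in IH1 IH2 *.
have := allIP (allIP (allIP HS_check (f a)) p.1) p.2.
rewrite -surjective_pairing IH1 /= => /andP[h1 /eqP h2].
by split; [exact: h1 | rewrite h2 IH2].
Qed.

Lemma MM_sat u v : sat MA u v -> sat MB u v -> sat MM u v.
Proof.
move=> hA hB f.
have [_ <-] := HS_eval f u; have [_ <-] := HS_eval f v.
by rewrite hA hB.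
Qed.

Section Rval.
Variables (canon : word -> word) (W : seq word).

Definition rval (x : rees_car canon W) : option word :=
  if x is Some y then Some (proj1_sig y) else None.

Lemma rval_inj : injective rval.
Proof.
case=> [[a ha]|] [[b hb]|] //= [e]; subst b.
by rewrite (proof_irrelevance _ ha hb).
Qed.

Lemma rval_mk_ok w : rees_ok canon W w -> rval (rees_mk canon W w) = Some w.
Proof. by move=> h; rewrite /rees_mk; case: excluded_middle_informative. Qed.

Lemma rval_mk_nok w : ~ rees_ok canon W w -> rval (rees_mk canon W w) = None.
Proof. by move=> h; rewrite /rees_mk; case: excluded_middle_informative. Qed.

Lemma rval_mul x y : rval (rees_mul x y) =
  if rval x is Some a then if rval y is Some b then rval (rees_mk canon W (canon (a ++ b)))
  else None else None.
Proof. by case: x => [[a ?]|]; case: y => [[b ?]|]. Qed.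

End Rval.

Definition WA := [:: w_xyx].

Lemma okA w : rees_ok id WA w <-> infix w w_xyx.
Proof.
split.
  case=> _ [u [hu [p [s E]]]]; move: hu E; rewrite mem_seq1 => /eqP -> E.
  by apply/infixP; exists p, s; rewrite -E.
move/infixP=> [p [s E]]; split=> //; exists w_xyx; split; first exact: mem_head.
by exists p, s; rewrite /= -E.
Qed.

Definition decA (w : word) := if infix w w_xyx then Some w else None.

Lemma rvalA w : rval (rees_mk id WA w) = decA w.
Proof.
rewrite /decA; case: ifP => h.
  by rewrite rval_mk_ok //; apply/okA; rewrite h.
by rewrite rval_mk_nok // => /okA; rewrite h.
Qed.

Definition hA (i : 'I_7) : rees_car id WA :=
  if nat_of_ord i == 6 then None else rees_mk id WA (nth [::] wA i).
Definition codeA (i : 'I_7) : option word :=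
  if nat_of_ord i == 6 then None else decA (nth [::] wA i).
Definition mulcA (o1 o2 : option word) :=
  if o1 is Some a then if o2 is Some b then decA (a ++ b) else None else None.

Lemma rval_hA i : rval (hA i) = codeA i.
Proof. by rewrite /hA /codeA; case: ifP => //; rewrite rvalA. Qed.

Lemma rval_mulA (x y : rees_car id WA) : rval (rees_mul x y) = mulcA (rval x) (rval y).
Proof.
rewrite rval_mul; case: (rval x) => [a|] //; case: (rval y) => [b|] //.
exact: rvalA.
Qed.

Lemma A_check1 : allI (fun i : 'I_6.+1 => allI (fun j : 'I_6.+1 =>
  codeA (mulT tA i j) == mulcA (codeA i) (codeA j))).
Proof. vm_compute; reflexivity. Qed.
Lemma A_check2 : allI (fun i : 'I_6.+1 => allI (fun j : 'I_6.+1 =>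
  (codeA i == codeA j) ==> (i == j))).
Proof. vm_compute; reflexivity. Qed.

Lemma MA_in : var_of (M_of WA) MA.
Proof.
split; first exact: MA_monoid.
move=> u v /(_ _ erefl); apply: (@sat_inj MA (M_of WA) hA).
- move=> a b; apply: rval_inj; rewrite /= rval_mulA !rval_hA; apply/eqP.
  exact: (allIP (allIP A_check1 a) b).
- by apply: rval_inj; rewrite rval_hA.
- move=> a b /(congr1 (@rval id WA)); rewrite !rval_hA => /eqP h.
  by apply/eqP; have := allIP (allIP A_check2 a) b; rewrite h.
Qed.

Definition WB := [:: w_xxyy].

Lemma compress_cons c t : compress (c :: t) =
  if compress t is b :: r then (if c == b then compress t else c :: compress t) else [:: c].
Proof. by []. Qed.

Lemma compress_nil t : compress t = [::] -> t = [::].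
Proof. by case: t => // c t; rewrite compress_cons; case: (compress t) => // b r; case: ifP. Qed.

Lemma mem_compress z : compress z =i z.
Proof.
elim: z => [|c t IH] // a; rewrite compress_cons.
case E: (compress t) => [|b r]; first by rewrite (compress_nil E).
case: ifP => [/eqP cb|_]; rewrite -E ?inE IH //.
have bt : b \in t by rewrite -IH E mem_head.
by case: eqP => // ->; rewrite cb bt.
Qed.

Lemma subseq_compress2 a b z : a != b -> subseq [:: a; b] z -> subseq [:: a; b] (compress z).
Proof.
move=> ab; elim: z => [|c t IH] //.
rewrite compress_cons /=.
case: (eqVneq a c) => [<-|ac].
  rewrite sub1seq => bt.
  case E: (compress t) => [|b' r]; first by move: bt; rewrite (compress_nil E).
  have : b \in compress t by rewrite mem_compress.
  rewrite E; case: ifP => [/eqP ab'|_]; [rewrite -ab' | ]; rewrite /= eqxx.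
    by rewrite inE eq_sym (negbTE ab) /= => h; rewrite sub1seq.
  case: eqP => [_ _|nb]; first exact: sub0seq.
  by rewrite inE => /orP[/eqP//|h]; rewrite sub1seq.
move=> /IH h.
case E: (compress t) => [|b' r]; first by move: h; rewrite E.
rewrite -E; case: ifP => _ //.
exact: subseq_trans h (subseq_cons _ _).
Qed.

Lemma subseq_flatten (s : seq nat) (h : nat -> seq nat) :
  (forall a, exists t, h a = a :: t) -> subseq s (flatten (map h s)).
Proof.
move=> H; elim: s => [|a s IH] //=.
have [t ->] := H a; rewrite /= eqxx.
exact: subseq_trans IH (suffix_subseq t _).
Qed.

Lemma gc_subseq a b z : a != b -> subseq [:: a; b] z -> subseq [:: a; b] (gamma_canon z).
Proof.
move=> ab /(subseq_compress2 ab) h; apply: (subseq_trans h).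
apply: subseq_flatten => c.
case: ifP => _; first by exists [::].
by case: ifP => _; [exists [:: c] | exists [::]].
Qed.

Lemma nokB w : subseq [:: 1; 0] w -> ~ rees_ok gamma_canon WB w.
Proof.
move=> hw [_ [u [hu [p [s E]]]]]; move: hu E; rewrite mem_seq1 => /eqP -> E.
have H : subseq [:: 1; 0] (p ++ w ++ s).
  exact: subseq_trans hw (subseq_trans (prefix_subseq w s) (suffix_subseq p (w ++ s))).
have := gc_subseq (isT : 1 != 0) H; rewrite E.
have -> : gamma_canon w_xxyy = w_xxyy by reflexivity.
by [].
Qed.

Lemma B_check0 : all (fun w => gamma_canon ([:: 0; 0] ++ w ++ [:: 1; 1]) == gamma_canon w_xxyy) wB.
Proof. vm_compute; reflexivity. Qed.
Lemma B_check0' : all (fun w => ~~ subseq [:: 1; 0] w) wB.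
Proof. vm_compute; reflexivity. Qed.

Lemma okB w : w \in wB -> gamma_canon w = w -> rees_ok gamma_canon WB w.
Proof.
move=> hw hc; split=> //; exists w_xxyy; split; first exact: mem_head.
exists [:: 0; 0], [:: 1; 1].
by have /allP/(_ w hw)/eqP := B_check0.
Qed.

Definition decB (w : word) := if w \in wB then Some w else None.
Definition goodB (w : word) := ((w \in wB) && (gamma_canon w == w)) || subseq [:: 1; 0] w.

Lemma rvalB w : goodB w -> rval (rees_mk gamma_canon WB w) = decB w.
Proof.
case/orP => [/andP[hw /eqP hc]|hs].
  by rewrite rval_mk_ok ?/decB ?hw //; exact: okB.
rewrite rval_mk_nok; last exact: nokB.
rewrite /decB; case: ifP => // hw.
by have /allP/(_ w hw) := B_check0'; rewrite hs.
Qed.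

Definition hB (i : 'I_10) : rees_car gamma_canon WB :=
  if nat_of_ord i == 9 then None else rees_mk gamma_canon WB (nth [::] wB i).
Definition codeB (i : 'I_10) : option word :=
  if nat_of_ord i == 9 then None else decB (nth [::] wB i).
Definition mulcB (o1 o2 : option word) :=
  if o1 is Some a then if o2 is Some b then decB (gamma_canon (a ++ b)) else None else None.
Definition goodP (o1 o2 : option word) :=
  if o1 is Some a then if o2 is Some b then goodB (gamma_canon (a ++ b)) else true else true.

Lemma B_check1 : allI (fun i : 'I_9.+1 => (nat_of_ord i == 9) || goodB (nth [::] wB i)).
Proof. vm_compute; reflexivity. Qed.
Lemma B_check2 : allI (fun i : 'I_9.+1 => allI (fun j : 'I_9.+1 =>
  (codeB (mulT tB i j) == mulcB (codeB i) (codeB j)) && goodP (codeB i) (codeB j))).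
Proof. vm_compute; reflexivity. Qed.
Lemma B_check3 : allI (fun i : 'I_9.+1 => allI (fun j : 'I_9.+1 =>
  (codeB i == codeB j) ==> (i == j))).
Proof. vm_compute; reflexivity. Qed.

Lemma rval_hB i : rval (hB i) = codeB i.
Proof.
rewrite /hB /codeB; case: ifP => // h; rewrite rvalB //.
by have := allIP B_check1 i; rewrite h.
Qed.

Lemma MB_in : var_of (Mgamma_of WB) MB.
Proof.
split; first exact: MB_monoid.
move=> u v /(_ _ erefl); apply: (@sat_inj MB (Mgamma_of WB) hB).
- move=> a b; apply: rval_inj; rewrite /= rval_mul !rval_hB.
  have /andP[/eqP -> G] := allIP (allIP B_check2 a) b.
  move: G; rewrite /mulcB /goodP.
  case: (codeB a) => [x|] //; case: (codeB b) => [y|] // G.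
  by rewrite rvalB.
- by apply: rval_inj; rewrite rval_hB.
- move=> a b /(congr1 (@rval gamma_canon WB)); rewrite !rval_hB => /eqP h.
  by apply/eqP; have := allIP (allIP B_check3 a) b; rewrite h.
Qed.

Definition Xv : mclass := var_of MA.
Definition Yv : mclass := var_of MB.
Definition Zv : mclass := vjoin (var_of MA) (var_of MM).

Lemma MA_V : var_of (M_of [:: w_xyx]) MA. Proof. exact: MA_in. Qed.
Lemma MB_V : var_of (Mgamma_of [:: w_xxyy]) MB. Proof. exact: MB_in. Qed.

Lemma V_sat u v : (forall D, var_of (M_of [:: w_xyx]) D \/ var_of (Mgamma_of [:: w_xxyy]) D -> sat D u v) ->
  sat MA u v /\ sat MB u v.
Proof. by move=> H; split; apply: H; [left; exact: MA_V | right; exact: MB_V]. Qed.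

Lemma sX : subvariety Xv V_main.
Proof.
split; first exact: var_gen_variety.
move=> N HN; split; first by case: HN.
by move=> u v /V_sat [hA _]; exact: var_of_sat HN hA.
Qed.

Lemma sY : subvariety Yv V_main.
Proof.
split; first exact: var_gen_variety.
move=> N HN; split; first by case: HN.
by move=> u v /V_sat [_ hB]; exact: var_of_sat HN hB.
Qed.

Lemma sZ : subvariety Zv V_main.
Proof.
split; first exact: var_gen_variety.
move=> N [mN HN]; split=> // u v /V_sat [hA hB]; apply: HN => D [DA|DM].
- exact: var_of_sat DA hA.
- exact: var_of_sat DM (MM_sat hA hB).
Qed.

Lemma XZ : vsub Xv Zv.
Proof.
move=> N HN; split; first by case: HN.
by move=> u v H; apply: H; left.
Qed.

Theorem proposition5p1 : ~ subvar_lattice_modular V_main.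
Proof.
move=> Hmod.
have [_ H] := Hmod Xv Yv Zv sX sY sZ XZ MM.
have HR : vmeet (vjoin Xv Yv) Zv MM.
  split.
  - split; first exact: MM_monoid.
    move=> u v H'; apply: MM_sat; apply: H'.
    + by left; apply: var_of_self; exact: MA_monoid.
    + by right; apply: var_of_self; exact: MB_monoid.
  - split; first exact: MM_monoid.
    move=> u v H'; apply: H'; right; apply: var_of_self; exact: MM_monoid.
have [_ HL] := H HR.
apply: MM_not_sig; apply: HL => D [DX | [DY [_ DZ]]].
- exact: var_of_sat DX MA_sig.
- move=> f.
  rewrite (var_of_sat DY MB_1 f) -(var_of_sat DY MB_2 f).
  have : sat D tL tR.
    apply: DZ => E [EA|EM].
    + exact: var_of_sat EA MA_tau.
    + exact: var_of_sat EM MM_tau.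
  by move=> ->.
Qed.
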